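(* In the single-block Spice setting, at any iteration $k$ (with $\mathsf{R}(x^k)>0$ and $\mathsf{R}(\bar x^k)>0$), the matrices satisfy $H_k=Q_kM_k^{-1}\succ 0$ and $G_k=Q_k^\top+Q_k-M_k^\top H_k M_k\succ 0$ (with $H_k$, $G_k$ equal to the explicit matrices given in the context), and $$\rho\,[f(x)-f(\bar x^k)]+(w-\bar w^k)^\top\tfrac{1}{\eta_k}\Gamma(\bar w^k)\ \ge\ \tfrac12\|\bar w^k-w^k\|_{G_k}^2+\tfrac12\big(\|w-w^{k+1}\|_{H_k}^2-\|w-w^k\|_{H_k}^2\big)\qquad\forall\,w=(x,\lambda)\in\Omega .$$
   Context: Single-block Spice setting. Let $\mathcal{X}\subseteq\mathbb{R}^n$ be nonempty closed convex, $f:\mathbb{R}^n\to\mathbb{R}$ convex, $\phi_1,\dots,\phi_p:\mathbb{R}^n\to\mathbb{R}$ convex and continuously differentiable, $\Phi(x)=(\phi_1(x),\dots,\phi_p(x))^\top$, $\mathcal{D}\Phi(x)\in\mathbb{R}^{p\times n}$ its Jacobian. Let $\mathcal{Z}=\mathbb{R}^p_+$, $\Omega=\mathcal{X}\times\mathcal{Z}$, $w=(x,\lambda)$, $\Gamma(w)=(\mathcal{D}\Phi(x)^\top\lambda,\,-\Phi(x))$. For a symmetric matrix $A$, $\|v\|_A^2:=v^\top A v$; the norm of a matrix is the spectral norm; $\mathsf{R}(x):=\|\mathcal{D}\Phi(x)\|^2$. The scaled Lagrangian is $\mathcal{L}(x,\lambda,\rho,\eta)=\rho f(x)+\frac1\eta\lambda^\top\Phi(x)$.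 Fix $\rho>0$, $\mu>1$, a starting point $w^0=(x^0,\lambda^0)\in\Omega$ and positive numbers $\eta_0,\eta_1,\dots$. Given $w^k=(x^k,\lambda^k)\in\Omega$, iteration $k$ is: $r_k=\frac{1}{\eta_k}\sqrt{\mathsf{R}(x^k)}$; $\bar x^k=\arg\min_{x\in\mathcal{X}}\{\mathcal{L}(x,\lambda^k,\rho,\eta_k)+\frac{r_k}{2}\|x-x^k\|^2\}$; $s_k=\frac{\mu\,\mathsf{R}(\bar x^k)}{\eta_k\sqrt{\mathsf{R}(x^k)}}$; $\bar\lambda^k=\arg\max_{\lambda\in\mathcal{Z}}\{\mathcal{L}(\bar x^k,\lambda,\rho,\eta_k)-\frac{s_k}{2}\|\lambda-\lambda^k\|^2\}$ (equivalently $\bar\lambda^k=\max\{\lambda^k+\frac{1}{\eta_k s_k}\Phi(\bar x^k),0\}$ componentwise); $\bar w^k=(\bar x^k,\bar\lambda^k)$; and $w^{k+1}=w^k-M_k(w^k-\bar w^k)$ where $M_k=\begin{pmatrix}I_n & -\frac{1}{\eta_k r_k}\mathcal{D}\Phi(\bar x^k)^\top\\ 0 & I_p\end{pmatrix}$. It is assumed throughout that $\mathsf{R}(x^k)>0$ and $\mathsf{R}(\bar x^k)>0$ for all $k$. Define $Q_k=\begin{pmatrix} r_kI_n & -\frac{1}{\eta_k}\mathcal{D}\Phi(\bar x^k)^\top\\ 0 & s_kI_p\end{pmatrix}$, $H_k=\begin{pmatrix} r_kI_n&0\\0&s_kI_p\end{pmatrix}$, $G_k=\begin{pmatrix} r_kI_n&0\\0&s_kI_p-\frac{1}{\eta_k^2r_k}\mathcal{D}\Phi(\bar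 x^k)\mathcal{D}\Phi(\bar x^k)^\top\end{pmatrix}$. *)

(* Defs.v *)
From HB Require Import structures.
From mathcomp Require Import all_boot all_order all_algebra.
From mathcomp Require Import all_classical all_reals all_analysis.
Set Implicit Arguments. Unset Strict Implicit. Unset Printing Implicit Defensive.
Import Order.TTheory GRing.Theory Num.Theory.
Import numFieldNormedType.Exports.
Local Open Scope classical_set_scope.
Local Open Scope ring_scope.

Section SpiceDefs.
Variable R : realType.

Definition dotv (m : nat) (u v : 'cV[R]_m) : R := (u^T *m v) 0 0.
Definition sqn (m : nat) (u : 'cV[R]_m) : R := dotv u u.
Definition enorm (m : nat) (u : 'cV[R]_m) : R := Num.sqrt (sqn u).
Definition qform (m : nat) (A : 'M[R]_m) (v : 'cV[R]_m) : R := (v^T *m A *m v) 0 0.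
Definition posdef (m : nat) (A : 'M[R]_m) : Prop :=
  A^T = A /\ forall v : 'cV[R]_m, v != 0 -> 0 < qform A v.
Definition specnorm (p n : nat) (A : 'M[R]_(p, n)) : R :=
  sup [set enorm (A *m v) | v in [set v : 'cV[R]_n | enorm v <= 1]].
Definition nonnegv (p : nat) (l : 'cV[R]_p) : Prop := forall i, 0 <= l i 0.

Definition convex_setv (n : nat) (X : set 'cV[R]_n) : Prop :=
  forall x y t, X x -> X y -> 0 <= t <= 1 -> X (t *: x + (1 - t) *: y).
Definition convex_funv (n : nat) (g : 'cV[R]_n -> R) : Prop :=
  forall x y t, 0 <= t <= 1 -> g (t *: x + (1 - t) *: y) <= t * g x + (1 - t) * g y.

Definition Rfun (p n : nat) (J : 'cV[R]_n -> 'M[R]_(p, n)) (x : 'cV[R]_n) : R :=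
  specnorm (J x) ^+ 2.
Definition Lag (p n : nat) (f : 'cV[R]_n -> R) (Phi : 'cV[R]_n -> 'cV[R]_p)
  (x : 'cV[R]_n) (l : 'cV[R]_p) (rho eta : R) : R :=
  rho * f x + eta^-1 * dotv l (Phi x).
Definition Gam (p n : nat) (Phi : 'cV[R]_n -> 'cV[R]_p) (J : 'cV[R]_n -> 'M[R]_(p, n))
  (x : 'cV[R]_n) (l : 'cV[R]_p) : 'cV[R]_(n + p) :=
  col_mx ((J x)^T *m l) (- Phi x).

Definition Mmat (p n : nat) (eta r : R) (D : 'M[R]_(p, n)) : 'M[R]_(n + p) :=
  block_mx 1%:M (- ((eta * r)^-1 *: D^T)) 0 1%:M.
Definition Qmat (p n : nat) (eta r s : R) (D : 'M[R]_(p, n)) : 'M[R]_(n + p) :=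
  block_mx (r%:M) (- (eta^-1 *: D^T)) 0 (s%:M).
Definition Hmat (p n : nat) (r s : R) : 'M[R]_(n + p) :=
  block_mx (r%:M) 0 0 (s%:M).
Definition Gmat (p n : nat) (eta r s : R) (D : 'M[R]_(p, n)) : 'M[R]_(n + p) :=
  block_mx (r%:M) 0 0 (s%:M - (eta ^+ 2 * r)^-1 *: (D *m D^T)).

End SpiceDefs.

(* Main.v *)
Require Import Defs.
From HB Require Import structures.
From mathcomp Require Import all_boot all_order all_algebra.
From mathcomp Require Import all_classical all_reals all_analysis.
From mathcomp Require Import ring lra.
Import Order.TTheory GRing.Theory Num.Theory.
Import numFieldNormedType.Exports.
Local Open Scope classical_set_scope.
Local Open Scope ring_scope.
Set Implicit Arguments. Unset Strict Implicit. Unset Printing Implicit Defensive.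

Section Helpers.
Variable R : realType.

Lemma dotvE m (u v : 'cV[R]_m) : dotv u v = \sum_i u i 0 * v i 0.
Proof. by rewrite /dotv mxE; apply: eq_bigr => i _; rewrite mxE. Qed.

Lemma dotvC m (u v : 'cV[R]_m) : dotv u v = dotv v u.
Proof. by rewrite !dotvE; apply: eq_bigr => i _; rewrite mulrC. Qed.

Lemma dotvDl m (u w v : 'cV[R]_m) : dotv (u + w) v = dotv u v + dotv w v.
Proof. by rewrite !dotvE -big_split; apply: eq_bigr => i _; rewrite mxE mulrDl. Qed.
Lemma dotvDr m (u w v : 'cV[R]_m) : dotv v (u + w) = dotv v u + dotv v w.
Proof. by rewrite dotvC dotvDl !(dotvC v). Qed.
Lemma dotvNl m (u v : 'cV[R]_m) : dotv (- u) v = - dotv u v.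
Proof. by rewrite !dotvE -sumrN; apply: eq_bigr => i _; rewrite mxE mulNr. Qed.
Lemma dotvNr m (u v : 'cV[R]_m) : dotv v (- u) = - dotv v u.
Proof. by rewrite dotvC dotvNl dotvC. Qed.
Lemma dotvBl m (u w v : 'cV[R]_m) : dotv (u - w) v = dotv u v - dotv w v.
Proof. by rewrite dotvDl dotvNl. Qed.
Lemma dotvBr m (u w v : 'cV[R]_m) : dotv v (u - w) = dotv v u - dotv v w.
Proof. by rewrite dotvDr dotvNr. Qed.
Lemma dotvZl m (a : R) (u v : 'cV[R]_m) : dotv (a *: u) v = a * dotv u v.
Proof. by rewrite !dotvE mulr_sumr; apply: eq_bigr => i _; rewrite mxE mulrA. Qed.
Lemma dotvZr m (a : R) (u v : 'cV[R]_m) : dotv v (a *: u) = a * dotv v u.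
Proof. by rewrite dotvC dotvZl dotvC. Qed.
Lemma dotv0l m (v : 'cV[R]_m) : dotv 0 v = 0.
Proof. by rewrite dotvE big1 // => i _; rewrite mxE mul0r. Qed.
Lemma dotvMr m k (A : 'M[R]_(k, m)) (u : 'cV[R]_k) (v : 'cV[R]_m) :
  dotv u (A *m v) = dotv (A^T *m u) v.
Proof. by rewrite /dotv trmx_mul trmxK mulmxA. Qed.
Lemma dotv_col m1 m2 (a c : 'cV[R]_m1) (b d : 'cV[R]_m2) :
  dotv (col_mx a b) (col_mx c d) = dotv a c + dotv b d.
Proof. by rewrite /dotv tr_col_mx mul_row_col mxE. Qed.

Lemma sqn_ge0 m (v : 'cV[R]_m) : 0 <= sqn v.
Proof. by rewrite /sqn dotvE sumr_ge0 // => i _; rewrite -expr2 sqr_ge0. Qed.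

Lemma sqn_gt0 m (v : 'cV[R]_m) : v != 0 -> 0 < sqn v.
Proof.
move=> v0; rewrite lt_def sqn_ge0 andbT; apply: contra v0 => /eqP.
rewrite /sqn dotvE => /eqP; rewrite psumr_eq0 => [/allP H|i _]; last by rewrite -expr2 sqr_ge0.
apply/eqP/matrixP => i j; rewrite (ord1 j) mxE.
by have := H i (mem_index_enum _); rewrite -expr2 sqrf_eq0 => /eqP.
Qed.

Lemma qform_block m1 m2 (A : 'M[R]_m1) (B : 'M[R]_m2) a b :
  qform (block_mx A 0 0 B) (col_mx a b) = qform A a + qform B b.
Proof.
rewrite /qform tr_col_mx mul_row_block !mulmx0 addr0 add0r mul_row_col mxE.
by [].
Qed.

Lemma qform_scalar m (r : R) (a : 'cV[R]_m) : qform r%:M a = r * sqn a.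
Proof. by rewrite /qform mul_mx_scalar -scalemxAl mxE. Qed.

Lemma qformB m (A B : 'M[R]_m) a : qform (A - B) a = qform A a - qform B a.
Proof. by rewrite /qform mulmxBr mulmxBl !mxE. Qed.

Lemma qformZ m (c : R) (A : 'M[R]_m) a : qform (c *: A) a = c * qform A a.
Proof. by rewrite /qform -scalemxAr -scalemxAl mxE. Qed.

Lemma qform_DDt k m (D : 'M[R]_(k, m)) b : qform (D *m D^T) b = sqn (D^T *m b).
Proof. by rewrite /qform /sqn /dotv trmx_mul trmxK !mulmxA. Qed.


Lemma sqnZ m (a : R) (v : 'cV[R]_m) : sqn (a *: v) = a ^+ 2 * sqn v.
Proof. by rewrite /sqn dotvZl dotvZr mulrA expr2. Qed.

Lemma sqnD m (u v : 'cV[R]_m) : sqn (u + v) = sqn u + 2 * dotv u v + sqn v.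
Proof. by rewrite /sqn dotvDl !dotvDr (dotvC v u); ring. Qed.

Lemma enorm_sqr m (v : 'cV[R]_m) : enorm v ^+ 2 = sqn v.
Proof. by rewrite /enorm sqr_sqrtr // sqn_ge0. Qed.

Lemma entry_le m (v : 'cV[R]_m) i : v i 0 ^+ 2 <= sqn v.
Proof.
rewrite /sqn dotvE (bigD1 i) //= -expr2 lerDl sumr_ge0 // => j _.
by rewrite -expr2 sqr_ge0.
Qed.

Lemma spec_has_sup k m (A : 'M[R]_(k, m)) :
  has_sup [set enorm (A *m v) | v in [set v : 'cV[R]_m | enorm v <= 1]].
Proof.
split.
  exists (enorm (A *m 0)), 0 => //=.
  by rewrite /enorm /sqn dotv0l sqrtr0.
pose c i := \sum_j `|A i j|.
exists (Num.sqrt (\sum_i c i ^+ 2)) => _ [v /= v1 <-].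
rewrite /enorm ler_sqrt; last by rewrite sumr_ge0 // => i _; rewrite sqr_ge0.
have sv1 : sqn v <= 1.
  by rewrite -enorm_sqr; rewrite expr_le1 // /enorm sqrtr_ge0.
rewrite /sqn dotvE; apply: ler_sum => i _.
rewrite -expr2 -[X in X <= _]real_normK ?num_real // ler_sqr; first last.
- by rewrite nnegrE /c sumr_ge0.
- by rewrite nnegrE normr_ge0.
rewrite mxE; apply: le_trans (ler_norm_sum _ _ _) _.
apply: ler_sum => j _; rewrite normrM -[X in _ <= X]mulr1.
apply: ler_wpM2l => //.
have := le_trans (entry_le v j) sv1.
by move=> h; rewrite -(@expr_le1 _ 2) // real_normK ?num_real.
Qed.

Lemma spec_ge0 k m (A : 'M[R]_(k, m)) : 0 <= specnorm A.
Proof.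
have [_ ub] := spec_has_sup A.
apply: le_trans (sup_upper_bound (spec_has_sup A) _); last first.
  by exists 0 => //=; rewrite /enorm /sqn dotv0l sqrtr0 ler01.
by rewrite /enorm sqrtr_ge0.
Qed.

Lemma enormZ m (a : R) (w : 'cV[R]_m) : enorm (a *: w) = `|a| * enorm w.
Proof. by rewrite /enorm sqnZ sqrtrM ?sqr_ge0 // sqrtr_sqr. Qed.

Lemma enorm_ge0 m (w : 'cV[R]_m) : 0 <= enorm w.
Proof. exact: sqrtr_ge0. Qed.

Lemma spec_bound k m (A : 'M[R]_(k, m)) u :
  sqn (A *m u) <= specnorm A ^+ 2 * sqn u.
Proof.
suff h : enorm (A *m u) <= specnorm A * enorm u.
  rewrite -!enorm_sqr -exprMn ler_sqr // nnegrE ?enorm_ge0 //.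
  by rewrite mulr_ge0 ?spec_ge0 ?enorm_ge0.
have [->|u0] := eqVneq u 0.
  by rewrite mulmx0 {1}/enorm /sqn dotv0l sqrtr0 mulr_ge0 ?spec_ge0 ?enorm_ge0.
have e0 : 0 < enorm u by rewrite /enorm sqrtr_gt0 sqn_gt0.
have hv : enorm ((enorm u)^-1 *: u) <= 1.
  by rewrite enormZ ger0_norm ?invr_ge0 ?enorm_ge0 // mulVf // gt_eqF.
have := sup_upper_bound (spec_has_sup A) (ex_intro2 _ _ ((enorm u)^-1 *: u) hv erefl).
rewrite -scalemxAr enormZ ger0_norm ?invr_ge0 ?enorm_ge0 //.
by rewrite ler_pdivrMl // mulrC.
Qed.

Lemma dotv_le2 m (a c : 'cV[R]_m) (t : R) : 0 < t ->
  2 * dotv a c <= t * sqn a + t^-1 * sqn c.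
Proof.
move=> t0; have E : sqn (t *: a - c) = t*t*sqn a - 2*t*dotv a c + sqn c.
  by rewrite /sqn !(dotvBl, dotvBr, dotvZl, dotvZr) (dotvC c a); ring.
have h := sqn_ge0 (t *: a - c); rewrite E in h.
have E2 : t * sqn a + t^-1 * sqn c - 2 * dotv a c
    = t^-1 * (t*t*sqn a - 2*t*dotv a c + sqn c).
  by field; rewrite gt_eqF.
rewrite -subr_ge0 E2 mulr_ge0 // invr_ge0 ltW //.
Qed.

Lemma spec_bound_tr k m (A : 'M[R]_(k, m)) b : 0 < specnorm A ^+ 2 ->
  sqn (A^T *m b) <= specnorm A ^+ 2 * sqn b.
Proof.
move=> S0; set u := A^T *m b; set S2 := specnorm A ^+ 2.
have h1 : sqn u = dotv b (A *m u) by rewrite dotvMr.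
have h2 := dotv_le2 b (A *m u) S0.
have h3 := spec_bound A u.
rewrite -h1 -/S2 in h2 h3.
have h4 : S2^-1 * sqn (A *m u) <= sqn u.
  by rewrite ler_pdivrMl // mulrC.
lra.
Qed.


Lemma small_t (a b : R) : (forall t, 0 < t <= 1 -> 0 <= a + t * b) -> 0 <= a.
Proof.
move=> H; rewrite leNgt; apply/negP => a0.
have nb := normr_ge0 b.
set t := (- a) / (2 * (`|b| - a)).
have bpos : 0 < 2 * (`|b| - a) by lra.
have t0 : 0 < t by rewrite /t divr_gt0 //; lra.
have E : t * (2 * (`|b| - a)) = - a by rewrite /t mulfVK // gt_eqF.
have t1 : t <= 1.
  have : t * (2 * (`|b| - a)) <= 1 * (2 * (`|b| - a)) by rewrite E; lra.
  by rewrite ler_pM2r.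
have h : 0 <= a + t * b by apply: H; rewrite t0 t1.
have h2 : t * b <= t * `|b| by apply: ler_wpM2l; [exact: ltW | exact: ler_norm].
have h3 : 0 < t * (- a) by rewrite mulr_gt0 //; lra.
lra.
Qed.

Lemma lim_t (a c G : R) (q : R -> R) :
  q @ 0^' --> G -> (forall t, 0 < t <= 1 -> 0 <= a + q t + t * c) -> 0 <= a + G.
Proof.
move=> hG H; rewrite leNgt; apply/negP => hneg.
set d := - (a + G).
have d0 : 0 < d by rewrite /d; lra.
have nc := normr_ge0 c.
set eps := d / (2 * (`|c| + 1)).
have cpos : 0 < 2 * (`|c| + 1) by lra.
have e0 : 0 < eps by rewrite /eps divr_gt0.
have E : eps * (2 * (`|c| + 1)) = d by rewrite /eps mulfVK // gt_eqF.
have hG' := cvg_dnbhs_at_right hG.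
have d20 : 0 < d / 2 by rewrite divr_gt0.
move: hG' => /cvgrPdist_lt/(_ _ d20) hq.
have : \forall t \near 0^'+, (0 < t /\ t <= 1) /\ (`|G - q t| < d / 2 /\ t < eps).
  apply/near_andP; split; apply/near_andP; split => //.
  - exact: nbhs_right_gt.
  - exact: nbhs_right_le ltr01.
  - exact: nbhs_right_lt e0.
move=> /filter_ex [t [[t0 t1] [ht te]]].
have h : 0 <= a + q t + t * c by apply: H; rewrite t0 t1.
move: ht; rewrite ltr_norml => /andP [ht1 ht2].
have h2 : t * c <= t * `|c| by apply: ler_wpM2l; [exact: ltW | exact: ler_norm].
have h3 : t * `|c| <= eps * `|c| by apply: ler_wpM2r => //; exact: ltW.
have dE : d = - (a + G) by [].
lra.
Qed.


Lemma xopt n (f g : 'cV[R]_n -> R) (X : set 'cV[R]_n) xb xk x (r rho G : R) :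
  convex_setv X -> convex_funv f -> 0 <= rho -> X xb -> X x ->
  (forall y, X y -> rho * f xb + g xb + r / 2 * sqn (xb - xk)
                    <= rho * f y + g y + r / 2 * sqn (y - xk)) ->
  (fun t => t^-1 * (g (t *: (x - xb) + xb) - g xb)) @ 0^' --> G ->
  0 <= rho * (f x - f xb) + G + r * dotv (xb - xk) (x - xb).
Proof.
move=> cX cf rho0 Xb Xx Hmin hG.
suff : 0 <= (rho * (f x - f xb) + r * dotv (xb - xk) (x - xb)) + G by lra.
apply: (lim_t (c := r / 2 * sqn (x - xb)) hG) => t /andP [t0 t1].
set y := t *: (x - xb) + xb.
have yE : y = t *: x + (1 - t) *: xb.
  by apply/matrixP => i j; rewrite !mxE; ring.
have Xy : X y by rewrite yE; apply: cX => //; rewrite (ltW t0) t1.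
have fy : f y <= t * f x + (1 - t) * f xb by rewrite yE; apply: cf; rewrite (ltW t0) t1.
have Sy : sqn (y - xk) = t * t * sqn (x - xb) + 2 * t * dotv (xb - xk) (x - xb)
                        + sqn (xb - xk).
  have -> : y - xk = t *: (x - xb) + (xb - xk).
    by apply/matrixP => i j; rewrite !mxE; ring.
  by rewrite (sqnD (t *: (x - xb))) sqnZ dotvZl (dotvC (x - xb)); ring.
have Hy := Hmin y Xy; rewrite Sy in Hy.
have fy' : rho * f y <= rho * (t * f x + (1 - t) * f xb) by apply: ler_wpM2l.
rewrite -(pmulr_rge0 _ t0).
have E : t * (rho * (f x - f xb) + r * dotv (xb - xk) (x - xb) + t^-1 * (g y - g xb)
            + t * (r / 2 * sqn (x - xb)))
       = t * (rho * (f x - f xb)) + t * (r * dotv (xb - xk) (x - xb)) + (g y - g xb)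
            + t * t * (r / 2 * sqn (x - xb)).
  by field; rewrite gt_eqF.
rewrite E; lra.
Qed.

Lemma lopt p (ph lb lk : 'cV[R]_p) (c0 e s : R) :
  nonnegv lb ->
  (forall l, nonnegv l -> c0 + e * dotv l ph - s / 2 * sqn (l - lk)
                        <= c0 + e * dotv lb ph - s / 2 * sqn (lb - lk)) ->
  forall l, nonnegv l ->
  0 <= - e * dotv (l - lb) ph + s * dotv (lb - lk) (l - lb).
Proof.
move=> nb H l nl.
apply: (small_t (b := s / 2 * sqn (l - lb))) => t /andP [t0 t1].
set y := t *: (l - lb) + lb.
have ny : nonnegv y.
  move=> i; have -> : y i 0 = t * l i 0 + (1 - t) * lb i 0.
    by rewrite !mxE; ring.
  by rewrite addr_ge0 // mulr_ge0 // ?(ltW t0) ?nl ?nb // subr_ge0.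
have Hy := H y ny.
have Sy : sqn (y - lk) = t * t * sqn (l - lb) + 2 * t * dotv (lb - lk) (l - lb)
                        + sqn (lb - lk).
  have -> : y - lk = t *: (l - lb) + (lb - lk).
    by apply/matrixP => i j; rewrite !mxE; ring.
  by rewrite (sqnD (t *: (l - lb))) sqnZ dotvZl (dotvC (l - lb)); ring.
have Dy : dotv y ph = t * dotv (l - lb) ph + dotv lb ph.
  by rewrite /y (dotvDl (t *: (l - lb))) dotvZl.
rewrite Sy Dy in Hy.
rewrite -(pmulr_rge0 _ t0).
have E : t * (- e * dotv (l - lb) ph + s * dotv (lb - lk) (l - lb) + t * (s / 2 * sqn (l - lb)))
   = - (t * (e * dotv (l - lb) ph)) + s * (t * dotv (lb - lk) (l - lb))
     + s / 2 * (t * t * sqn (l - lb)) by ring.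
rewrite E; lra.
Qed.


Lemma dir_deriv n p (Phi : 'cV[R]_n -> 'cV[R]_p) (lk : 'cV[R]_p) (e : R) x0 d L :
  differentiable Phi x0 -> 'd Phi x0 d = L ->
  (fun t => t^-1 * (e * dotv lk (Phi (t *: d + x0)) - e * dotv lk (Phi x0)))
     @ 0^' --> e * dotv lk L.
Proof.
move=> hdiff hL.
have hd := @diff_derivable _ _ _ Phi x0 d hdiff.
have hlim : 'D_d Phi x0 = L by rewrite deriveE.
set q := fun h : R => h^-1 *: (Phi (h *: d + x0) - Phi x0).
have hq : q @ 0^' --> L.
  rewrite -hlim; exact: hd.
have hc : forall i, (fun h => lk i 0 * q h i 0) @ 0^' --> lk i 0 * L i 0.
  move=> i; apply: cvgM; first exact: cvg_cst.
  exact: (@cvg_comp _ _ _ q (fun M : 'cV[R]_p => M i 0) _ _ _ hq (@coord_continuous _ p 1 i 0 L)).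
have hs : (fun h => \sum_i lk i 0 * q h i 0) @ 0^' --> \sum_i lk i 0 * L i 0.
  have := (@cvg_big _ _ +%R 0 (fun _ => true) (@add_continuous _) R (0^') (index_enum _)
    (fun i h => lk i 0 * q h i 0) (fun i => lk i 0 * L i 0) _ (fun i _ => hc i)).
  exact.
rewrite -dotvE in hs.
have -> : (fun t => t^-1 * (e * dotv lk (Phi (t *: d + x0)) - e * dotv lk (Phi x0)))
   = (fun t => e * (\sum_i lk i 0 * q t i 0)).
  apply/funext => t; rewrite -dotvE /q dotvZr dotvBr; ring.
apply: cvgM; first exact: cvg_cst.
exact: hs.
Qed.

End Helpers.

Unset Implicit Arguments.

Theorem lemma3p2 (R : realType) (n p : nat) (X : set 'cV[R]_n)
  (f : 'cV[R]_n -> R) (Phi : 'cV[R]_n -> 'cV[R]_p) (J : 'cV[R]_n -> 'M[R]_(p, n))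
  (rho mu eta : R) (xk : 'cV[R]_n) (lk : 'cV[R]_p) (xb : 'cV[R]_n) (lb : 'cV[R]_p) :
  X !=set0 -> closed X -> convex_setv X ->
  convex_funv f ->
  (forall i : 'I_p, convex_funv (fun x => Phi x i 0)) ->
  (forall x, differentiable Phi x /\ forall v, 'd Phi x v = J x *m v) ->
  continuous J ->
  0 < rho -> 1 < mu -> 0 < eta ->
  X xk -> nonnegv lk ->
  0 < Rfun J xk ->
  let r := eta^-1 * Num.sqrt (Rfun J xk) in
  X xb ->
  (forall x, X x ->
     Lag f Phi xb lk rho eta + r / 2 * sqn (xb - xk)
       <= Lag f Phi x lk rho eta + r / 2 * sqn (x - xk)) ->
  0 < Rfun J xb ->
  let s := mu * Rfun J xb / (eta * Num.sqrt (Rfun J xk)) in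
  nonnegv lb ->
  (forall l, nonnegv l ->
     Lag f Phi xb l rho eta - s / 2 * sqn (l - lk)
       <= Lag f Phi xb lb rho eta - s / 2 * sqn (lb - lk)) ->
  let wk := col_mx xk lk in
  let wb := col_mx xb lb in
  let Mk := Mmat eta r (J xb) in
  let Qk := Qmat eta r s (J xb) in
  let Hk := Hmat p n r s in
  let Gk := Gmat eta r s (J xb) in
  let wk1 := wk - Mk *m (wk - wb) in
  [/\ Mk \in unitmx, Hk = Qk *m invmx Mk, posdef Hk,
      Gk = Qk^T + Qk - Mk^T *m Hk *m Mk & posdef Gk] /\
      forall (x : 'cV[R]_n) (l : 'cV[R]_p), X x -> nonnegv l ->
        let w := col_mx x l in
        rho * (f x - f xb) + dotv (w - wb) (eta^-1 *: Gam Phi J xb lb)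
          >= 1 / 2 * qform Gk (wb - wk)
             + 1 / 2 * (qform Hk (w - wk1) - qform Hk (w - wk)).
Proof.
move=> _ _ cX cf _ hPhi _ rho0 mu1 eta0 Xk nlk Rk0 r Xb Hx Rb0 s nlb Hl
  wk wb Mk Qk Hk Gk wk1.
set D := J xb.
set sq := Num.sqrt (Rfun J xk).
have sq0 : 0 < sq by rewrite /sq sqrtr_gt0.
have r0 : 0 < r by rewrite /r mulr_gt0 // invr_gt0.
have s0 : 0 < s.
  rewrite /s; apply: divr_gt0; apply: mulr_gt0 => //; lra.
have rE : r = eta^-1 * sq by [].
have sE : s = mu * Rfun J xb / (eta * sq) by [].
have rc : r * (eta * r)^-1 = eta^-1 by field; rewrite !gt_eqF.
have rcc : r * ((eta * r)^-1 * (eta * r)^-1) = (eta ^+ 2 * r)^-1.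
  by field; rewrite !gt_eqF.
have QHM : Qk = Hk *m Mk.
  rewrite /Qk /Hk /Mk /Qmat /Hmat /Mmat mulmx_block !mulmx1 !mul0mx !mulmx0 !addr0 !add0r.
  by rewrite mul_scalar_mx scalerN scalerA rc.
have Mu : Mk \in unitmx by rewrite unitmxE /Mk /Mmat det_ublock !det1 mulr1 unitr1.
have Hsym : Hk^T = Hk by rewrite /Hk /Hmat tr_block_mx !tr_scalar_mx !trmx0.
have posH : posdef Hk.
  split => // v v0.
  rewrite -(vsubmxK v) /Hk /Hmat qform_block !qform_scalar.
  have [u0|u0] := eqVneq (usubmx v) 0.
    have d0 : dsubmx v != 0.
      by apply: contra v0 => /eqP d0; rewrite -(vsubmxK v) u0 d0 col_mx0.
    by rewrite u0 {1}/sqn dotv0l mulr0 add0r mulr_gt0 // sqn_gt0.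
  have h1 : 0 < r * sqn (usubmx v) by rewrite mulr_gt0 // sqn_gt0.
  have h2 : 0 <= s * sqn (dsubmx v) by rewrite mulr_ge0 ?sqn_ge0 // ltW.
  lra.
have GE : Gk = Qk^T + Qk - Mk^T *m Hk *m Mk.
  rewrite -mulmxA -QHM /Gk /Qk /Mk /Gmat /Qmat /Mmat !tr_block_mx !tr_scalar_mx !trmx0.
  rewrite !linearN !linearZ /= trmxK mulmx_block.
  rewrite ?mulmx1 ?mul1mx ?mul0mx ?mulmx0 ?addr0 ?add0r.
  rewrite ?mulNmx ?mulmxN ?opprK -?scalemxAl -?scalemxAr ?mul_scalar_mx ?mul_mx_scalar ?scalerA.
  rewrite opp_block_mx !add_block_mx.
  have e1 : (eta * r)^-1 * r = eta^-1 by field; rewrite !gt_eqF.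
  have e2 : (eta * r)^-1 / eta = (eta ^+ 2 * r)^-1 by field; rewrite !gt_eqF.
  rewrite e1 e2 mulNmx mulmxN opprK.
  congr block_mx.
  - by rewrite addrK.
  - by rewrite add0r subrr.
  - by rewrite addr0 subrr.
  - by apply/matrixP => i j; rewrite !mxE; ring.
have posG : posdef Gk.
  split.
    rewrite /Gk /Gmat tr_block_mx !tr_scalar_mx !trmx0 linearB /= linearZ /= trmx_mul trmxK.
    by rewrite tr_scalar_mx.
  move=> v v0.
  rewrite -(vsubmxK v) /Gk /Gmat qform_block qform_scalar qformB qform_scalar qformZ qform_DDt.
  set k := (eta ^+ 2 * r)^-1.
  have k0 : 0 <= k by rewrite /k invr_ge0 mulr_ge0 // ?exprn_ge0 // ltW.
  have Rb0' : 0 < specnorm (J xb) ^+ 2 by [].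
  have hb := spec_bound_tr (dsubmx v) Rb0'.
  have hkb : k * sqn ((J xb)^T *m dsubmx v) <= k * (specnorm (J xb) ^+ 2 * sqn (dsubmx v)).
    by apply: ler_wpM2l.
  have sk : 0 < s - k * specnorm (J xb) ^+ 2.
    have -> : s - k * specnorm (J xb) ^+ 2 = (mu - 1) * Rfun J xb / (eta * sq).
      rewrite sE /k rE /Rfun; field; rewrite !gt_eqF //.
    by apply: divr_gt0; [apply: mulr_gt0 => //; lra | apply: mulr_gt0].
  have hu := sqn_ge0 (usubmx v); have hd := sqn_ge0 (dsubmx v).
  have [u0|u0] := eqVneq (usubmx v) 0.
    have d0 : dsubmx v != 0.
      by apply: contra v0 => /eqP d0; rewrite -(vsubmxK v) u0 d0 col_mx0.
    have h1 : 0 < (s - k * specnorm (J xb) ^+ 2) * sqn (dsubmx v) by rewrite mulr_gt0 // sqn_gt0.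
    have h2 : 0 <= r * sqn (usubmx v) by rewrite mulr_ge0 // ltW.
    lra.
  have h1 : 0 < r * sqn (usubmx v) by rewrite mulr_gt0 // sqn_gt0.
  have h2 : 0 <= (s - k * specnorm (J xb) ^+ 2) * sqn (dsubmx v) by rewrite mulr_ge0 // ltW.
  lra.
have HQ : Hk = Qk *m invmx Mk by rewrite QHM -mulmxA mulmxV // mulmx1.
split; first by split.
move=> x l Xx nl /=.
have hA : 0 <= rho * (f x - f xb) + eta^-1 * dotv lk (J xb *m (x - xb))
              + r * dotv (xb - xk) (x - xb).
  apply: (xopt (g := fun y => eta^-1 * dotv lk (Phi y)) cX cf (ltW rho0) Xb Xx).
    by move=> y Xy; exact: Hx y Xy.
  by have [hd hJ] := hPhi xb; exact: dir_deriv hd (hJ (x - xb)).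
have hB : 0 <= - eta^-1 * dotv (l - lb) (Phi xb) + s * dotv (lb - lk) (l - lb).
  apply: (lopt (c0 := rho * f xb)) => // l' nl'; exact: Hl l' nl'.
have e1 : wb - wk = col_mx (xb - xk) (lb - lk) by rewrite /wb /wk opp_col_mx add_col_mx.
have e2 : col_mx x l - wk = col_mx ((x - xb) + (xb - xk)) ((l - lb) + (lb - lk)).
  by rewrite /wk opp_col_mx add_col_mx !addrA !subrK.
have e3 : col_mx x l - wk1
    = col_mx ((x - xb) + (eta * r)^-1 *: ((J xb)^T *m (lb - lk))) (l - lb).
  rewrite /wk1 /Mk /Mmat /wk /wb opp_col_mx add_col_mx mul_block_col !mul1mx mul0mx add0r.
  rewrite mulNmx -scalemxAl !opp_col_mx !add_col_mx !mulmxBr opp_col_mx add_col_mx.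
  by congr col_mx; apply/matrixP => i j; rewrite !mxE; ring.
have e4 : col_mx x l - wb = col_mx (x - xb) (l - lb) by rewrite /wb opp_col_mx add_col_mx.
rewrite e1 e2 e3 e4 /Gk /Gmat /Hk /Hmat !qform_block !qform_scalar qformB qform_scalar qformZ.
rewrite qform_DDt /Gam scale_col_mx dotv_col.
set V := (J xb)^T *m (lb - lk).
rewrite (sqnD (x - xb) ((eta * r)^-1 *: V)) (sqnD (x - xb) (xb - xk)) (sqnD (l - lb) (lb - lk)).
rewrite sqnZ !dotvZr dotvNr.
have hV : dotv (x - xb) V = dotv (x - xb) ((J xb)^T *m lb) - dotv (x - xb) ((J xb)^T *m lk).
  by rewrite /V mulmxBr dotvBr.
rewrite dotvMr (dotvC _ (x - xb)) (dotvC (xb - xk)) in hA.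
rewrite (dotvC (lb - lk)) in hB.
have E1 : r * ((eta * r)^-1 ^+ 2 * sqn V) = (eta ^+ 2 * r)^-1 * sqn V.
  by rewrite -rcc; ring.
have E2 : r * (2 * ((eta * r)^-1 * dotv (x - xb) V)) = 2 * (eta^-1 * dotv (x - xb) V).
  by rewrite -rc; ring.
have hV' : eta^-1 * dotv (x - xb) V = eta^-1 * dotv (x - xb) ((J xb)^T *m lb)
    - eta^-1 * dotv (x - xb) ((J xb)^T *m lk) by rewrite hV; ring.
lra.
Qed.
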